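(* Let $G$ be a bipartite graph that is not planar. Then there are no finite point sets $P,W$ in the plane with $P\cup W$ in general position such that $\mathrm{DG}^-(P,W)$ is isomorphic to $G$.
   Context: Let $P$ (the vertices) and $W$ (the witnesses) be finite point sets in $\mathbb{R}^2$; $P$ and $W$ may share points. The witness Delaunay graph $\mathrm{DG}^-(P,W)$ is the graph with vertex set $P$ in which distinct $x,y\in P$ are adjacent if and only if there is an open disk containing no point of $W$ whose bounding circle passes through $x$ and $y$. General position of $P\cup W$ means that no three distinct points of $P\cup W$ are collinear and no four distinct points of $P\cup W$ are concyclic. *)

(* Defs.v *)
From Stdlib Require Import Reals List.
Open Scope R_scope.

Definition pt := (R * R)%type.

Definition dist2 (p q : pt) : R := (fst p - fst q)^2 + (snd p - snd q)^2.

Definition collinear3 (a b c : pt) : Prop :=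
  (fst b - fst a) * (snd c - snd a) - (snd b - snd a) * (fst c - fst a) = 0.

Definition concyclic4 (a b c d : pt) : Prop :=
  exists (o : pt) (r : R), 0 < r /\
    dist2 o a = r^2 /\ dist2 o b = r^2 /\ dist2 o c = r^2 /\ dist2 o d = r^2.

Definition general_position (S : list pt) : Prop :=
  (forall a b c, In a S -> In b S -> In c S ->
     a <> b -> a <> c -> b <> c -> ~ collinear3 a b c) /\
  (forall a b c d, In a S -> In b S -> In c S -> In d S ->
     a <> b -> a <> c -> a <> d -> b <> c -> b <> d -> c <> d ->
     ~ concyclic4 a b c d).

(* adjacency in the witness Delaunay graph DG^-(P,W): there is an open disk
   (center o, radius r) containing no point of W whose boundary circle
   passes through x and y *)
Definition wdg_adj (W : list pt) (x y : pt) : Prop :=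
  x <> y /\
  exists (o : pt) (r : R), 0 < r /\ dist2 o x = r^2 /\ dist2 o y = r^2 /\
    forall w, In w W -> ~ (dist2 o w < r^2).

Definition iso_to_wdg (V : Type) (adj : V -> V -> Prop) (P W : list pt) : Prop :=
  exists phi : V -> pt,
    (forall u v, phi u = phi v -> u = v) /\
    (forall p, In p P <-> exists v, phi v = p) /\
    (forall u v, adj u v <-> wdg_adj W (phi u) (phi v)).

Definition bipartite (V : Type) (adj : V -> V -> Prop) : Prop :=
  exists c : V -> bool, forall u v, adj u v -> c u <> c v.

Definition same_edge {V : Type} (u v u' v' : V) : Prop :=
  (u = u' /\ v = v') \/ (u = v' /\ v = u').

Definition planar (V : Type) (adj : V -> V -> Prop) : Prop :=
  exists (pos : V -> pt) (arc : V -> V -> R -> pt),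
    (forall u v, pos u = pos v -> u = v) /\
    (forall u v, adj u v ->
       continuity (fun t => fst (arc u v t)) /\
       continuity (fun t => snd (arc u v t)) /\
       arc u v 0 = pos u /\ arc u v 1 = pos v /\
       (forall s t, 0 <= s <= 1 -> 0 <= t <= 1 -> arc u v s = arc u v t -> s = t) /\
       (forall t w, 0 < t < 1 -> arc u v t <> pos w)) /\
    (forall u v u' v' s t, adj u v -> adj u' v' -> ~ same_edge u v u' v' ->
       0 <= s <= 1 -> 0 <= t <= 1 -> arc u v s = arc u' v' t ->
       exists w, arc u v s = pos w).

(* Main.v *)
Require Import Defs.
From Stdlib Require Import Reals List Lra Psatz Classical.
Open Scope R_scope.

Definition seg (a b : pt) (s : R) : pt :=
  ((1-s)*fst a + s*fst b, (1-s)*snd a + s*snd b).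

Lemma pt_eq (a b : pt) : fst a = fst b -> snd a = snd b -> a = b.
Proof. destruct a, b; simpl; intros; subst; reflexivity. Qed.

Lemma seg0 a b : seg a b 0 = a.
Proof. apply pt_eq; unfold seg; simpl; ring. Qed.
Lemma seg1 a b : seg a b 1 = b.
Proof. apply pt_eq; unfold seg; simpl; ring. Qed.
Lemma seg_rev a b s : seg a b s = seg b a (1-s).
Proof. apply pt_eq; unfold seg; simpl; ring. Qed.

Lemma seg_col a b c t : a <> b -> 0 < t < 1 -> seg a b t = c ->
  c <> a /\ c <> b /\ collinear3 a b c.
Proof.
  intros Hab Ht Hc; subst c. split; [|split].
  - intro E. apply Hab. apply pt_eq.
    + apply (f_equal fst) in E; unfold seg in E; simpl in E. nra.
    + apply (f_equal snd) in E; unfold seg in E; simpl in E. nra.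
  - intro E. apply Hab. apply pt_eq.
    + apply (f_equal fst) in E; unfold seg in E; simpl in E. nra.
    + apply (f_equal snd) in E; unfold seg in E; simpl in E. nra.
  - unfold collinear3, seg; simpl; ring.
Qed.

Lemma shared_col a b c s t : 0 < s -> seg a b s = seg a c t -> collinear3 a b c.
Proof.
  intros Hs E.
  assert (E1 := f_equal fst E); assert (E2 := f_equal snd E).
  unfold seg in E1, E2; simpl in E1, E2.
  assert (F1 : s * (fst b - fst a) = t * (fst c - fst a)) by lra.
  assert (F2 : s * (snd b - snd a) = t * (snd c - snd a)) by lra.
  unfold collinear3.
  assert (K : s * ((fst b - fst a) * (snd c - snd a) - (snd b - snd a) * (fst c - fst a)) = 0).
  { replace (s * ((fst b - fst a) * (snd c - snd a) - (snd b - snd a) * (fst c - fst a)))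
      with ((s * (fst b - fst a)) * (snd c - snd a) - (s * (snd b - snd a)) * (fst c - fst a)) by ring.
    rewrite F1, F2; ring. }
  apply Rmult_integral in K; destruct K; [lra|assumption].
Qed.

Lemma dist2_pos x u : x <> u -> 0 < dist2 x u.
Proof.
  intro H. unfold dist2.
  destruct (Rle_lt_dec ((fst x - fst u) ^ 2 + (snd x - snd u) ^ 2) 0) as [L|L]; [|exact L].
  exfalso. apply H.
  assert (A := pow2_ge_0 (fst x - fst u)); assert (B := pow2_ge_0 (snd x - snd u)).
  assert (A0 : Rsqr (fst x - fst u) = 0) by (unfold Rsqr; simpl in *; lra). assert (B0 : Rsqr (snd x - snd u) = 0) by (unfold Rsqr; simpl in *; lra).
  apply Rsqr_0_uniq in A0; apply Rsqr_0_uniq in B0.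
  apply pt_eq; lra.
Qed.

Lemma inside_adj (W : list pt) (o2 : pt) (r2 : R) (x u : pt) :
  0 < r2 -> dist2 o2 x < r2^2 -> dist2 o2 u = r2^2 ->
  (forall w, In w W -> ~ dist2 o2 w < r2^2) -> x <> u -> wdg_adj W x u.
Proof.
  intros Hr Hx Hu HW Hxu. split; [exact Hxu|].
  set (q := dist2 x u).
  set (d := (fst x - fst u)*(fst o2 - fst u) + (snd x - snd u)*(snd o2 - snd u)).
  assert (Hq : 0 < q) by (apply dist2_pos; auto).
  assert (Id : dist2 o2 x = q - 2*d + dist2 o2 u) by (unfold q, d, dist2; ring).
  assert (Hd : q < 2*d) by lra.
  set (l := q / (2*d)).
  assert (Hl : l * (2*d) = q) by (unfold l; field; lra).
  assert (Hl0 : 0 < l) by (unfold l; apply Rdiv_lt_0_compat; lra).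
  assert (Hl1 : l < 1) by nra.
  exists (fst u + l*(fst o2 - fst u), snd u + l*(snd o2 - snd u)), (l*r2).
  split; [nra|split; [|split]].
  - assert (E : dist2 (fst u + l*(fst o2 - fst u), snd u + l*(snd o2 - snd u)) x - (l*r2)^2
               = (q - l*(2*d)) + l^2*(dist2 o2 u - r2^2)) by (unfold q, d, dist2; simpl; ring).
    rewrite Hl, Hu in E. lra.
  - assert (E : dist2 (fst u + l*(fst o2 - fst u), snd u + l*(snd o2 - snd u)) u - (l*r2)^2
               = l^2*(dist2 o2 u - r2^2)) by (unfold dist2; simpl; ring).
    rewrite Hu in E. lra.
  - intros w Hw Hin. apply (HW w Hw).
    set (o := (fst u + l*(fst o2 - fst u), snd u + l*(snd o2 - snd u))) in *.
    set (e1 := fst w - fst o). set (e2 := snd w - snd o).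
    set (g1 := fst u - fst o2). set (g2 := snd u - snd o2).
    assert (Hg : g1^2 + g2^2 = r2^2) by (rewrite <- Hu; unfold g1, g2, dist2; ring).
    assert (He : e1^2 + e2^2 < l^2 * r2^2) by (unfold e1, e2; unfold dist2 in Hin; lra).
    assert (E : dist2 o2 w = (e1^2+e2^2) + 2*(1-l)*(e1*g1+e2*g2) + (1-l)^2*(g1^2+g2^2))
      by (unfold e1, e2, g1, g2, o, dist2; simpl; ring).
    assert (S : 0 <= (e1 - l*g1)^2 + (e2 - l*g2)^2) by (assert (A := pow2_ge_0 (e1 - l*g1)); assert (B := pow2_ge_0 (e2 - l*g2)); lra).
    assert (S' : 2*l*(e1*g1+e2*g2) <= (e1^2+e2^2) + l^2*(g1^2+g2^2)) by nra.
    rewrite Hg in S', E.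
    assert (K : l * dist2 o2 w < l * r2^2).
    { rewrite E.
      assert (T : l*(2*(1-l)*(e1*g1+e2*g2)) <= (1-l)*((e1^2+e2^2) + l^2*r2^2)) by nra.
      nra. }
    nra.
Qed.

Lemma seg_affine (o1 o2 : pt) (r1 r2 : R) a b s :
  let f := fun z => dist2 o1 z - r1^2 - (dist2 o2 z - r2^2) in
  f (seg a b s) = (1-s) * f a + s * f b.
Proof. intros f; unfold f, seg, dist2; simpl; ring. Qed.

Lemma cross_tri (P W : list pt) x y u v s t :
  general_position (P ++ W) ->
  In x P -> In y P -> In u P -> In v P ->
  x <> y -> x <> u -> x <> v -> y <> u -> y <> v -> u <> v ->
  wdg_adj W x y -> wdg_adj W u v -> 0 < s < 1 -> 0 < t < 1 ->
  seg x y s = seg u v t ->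
  (wdg_adj W x u /\ wdg_adj W x v) \/ (wdg_adj W y u /\ wdg_adj W y v) \/
  (wdg_adj W u x /\ wdg_adj W u y) \/ (wdg_adj W v x /\ wdg_adj W v y).
Proof.
  intros [_ GP] Hx Hy Hu Hv d1 d2 d3 d4 d5 d6 [_ [o1 [r1 [Hr1 [Ex [Ey HW1]]]]]]
    [_ [o2 [r2 [Hr2 [Eu [Ev HW2]]]]]] Hs Ht E.
  destruct (Rlt_or_le (dist2 o2 x) (r2^2)) as [Ix|Ix].
  { left; split; apply (inside_adj W o2 r2); auto. }
  destruct (Rlt_or_le (dist2 o2 y) (r2^2)) as [Iy|Iy].
  { right; left; split; apply (inside_adj W o2 r2); auto. }
  destruct (Rlt_or_le (dist2 o1 u) (r1^2)) as [Iu|Iu].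
  { right; right; left; split; apply (inside_adj W o1 r1); auto. }
  destruct (Rlt_or_le (dist2 o1 v) (r1^2)) as [Iv|Iv].
  { right; right; right; split; apply (inside_adj W o1 r1); auto. }
  exfalso.
  assert (A1 := seg_affine o1 o2 r1 r2 x y s).
  assert (A2 := seg_affine o1 o2 r1 r2 u v t).
  simpl in A1, A2. rewrite E in A1. rewrite A1 in A2.
  rewrite Ex, Ey, Eu, Ev in A2.
  assert (Zx : dist2 o2 x = r2^2) by nra.
  assert (Zy : dist2 o2 y = r2^2) by nra.
  apply (GP x y u v); try (apply in_or_app; left; assumption); auto.
  exists o2, r2; repeat split; auto.
Qed.

Lemma seg_cont_fst a b : continuity (fun t => fst (seg a b t)).
Proof. unfold seg; simpl. reg. Qed.
Lemma seg_cont_snd a b : continuity (fun t => snd (seg a b t)).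
Proof. unfold seg; simpl. reg. Qed.

Lemma seg_inj a b s t : a <> b -> seg a b s = seg a b t -> s = t.
Proof.
  intros H E. destruct (Req_dec s t) as [|N]; auto. exfalso; apply H.
  assert (E1 := f_equal fst E); assert (E2 := f_equal snd E); unfold seg in E1, E2; simpl in E1, E2.
  apply pt_eq.
  - assert ((s-t)*(fst b - fst a) = 0) by lra. apply Rmult_integral in H0; destruct H0; lra.
  - assert ((s-t)*(snd b - snd a) = 0) by lra. apply Rmult_integral in H0; destruct H0; lra.
Qed.

Theorem mainTheorem7 (V : Type) (adj : V -> V -> Prop)
  (Hfin : exists l : list V, forall v, In v l)
  (Hsym : forall u v, adj u v -> adj v u)
  (Hirr : forall v, ~ adj v v)
  (Hbip : bipartite V adj)
  (Hnp : ~ planar V adj) :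
  forall P W : list pt, general_position (P ++ W) -> ~ iso_to_wdg V adj P W.
Proof.
  intros P W HGP [phi [Hinj [HP Hadj]]].
  assert (InP : forall v, In (phi v) P) by (intro v; apply HP; eauto).
  assert (Col : forall a b c, In a P -> In b P -> In c P -> a <> b -> a <> c -> b <> c ->
     collinear3 a b c -> False).
  { intros a b c Ha Hb Hc; apply (proj1 HGP); apply in_or_app; auto. }
  assert (Tri : forall a b c, adj a b -> adj b c -> adj a c -> False).
  { destruct Hbip as [col Hc]. intros a b c H1 H2 H3.
    apply Hc in H1; apply Hc in H2; apply Hc in H3.
    destruct (col a), (col b), (col c); congruence. }
  assert (Ne : forall u v, adj u v -> phi u <> phi v).
  { intros u v H; apply Hadj in H; apply H. }
  assert (Ninj : forall u v, u <> v -> phi u <> phi v).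
  { intros u v H E; apply H, Hinj, E. }
  apply Hnp. exists phi, (fun u v t => seg (phi u) (phi v) t).
  split; [exact Hinj|split].
  - intros u v Huv. repeat split.
    + apply seg_cont_fst.
    + apply seg_cont_snd.
    + apply seg0.
    + apply seg1.
    + intros s t _ _ E. apply seg_inj in E; auto.
    + intros t w Ht E. destruct (seg_col (phi u) (phi v) (phi w) t) as [N1 [N2 C]]; auto.
      apply (Col (phi u) (phi v) (phi w)); auto.
  - intros u v u' v' s t Huv Hu'v' Hns Hs Ht E.
    destruct (Req_dec s 0) as [->|S0]. { exists u; apply seg0. }
    destruct (Req_dec s 1) as [->|S1]. { exists v; apply seg1. }
    destruct (Req_dec t 0) as [->|T0]. { exists u'; rewrite E; apply seg0. }
    destruct (Req_dec t 1) as [->|T1]. { exists v'; rewrite E; apply seg1. }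
    exfalso.
    assert (Hs' : 0 < s < 1) by lra. assert (Ht' : 0 < t < 1) by lra.
    assert (N1 := Ne _ _ Huv). assert (N2 := Ne _ _ Hu'v').
    destruct (classic (u = u')) as [<-|D1].
    { assert (D : v <> v') by (intro; subst; apply Hns; left; auto).
      apply (Col (phi u) (phi v) (phi v')); auto.
      apply (shared_col _ _ _ s t); [lra|exact E]. }
    destruct (classic (u = v')) as [<-|D2].
    { assert (D : v <> u') by (intro; subst; apply Hns; right; auto).
      apply (Col (phi u) (phi v) (phi u')); auto.
      apply (shared_col _ _ _ s (1-t)); [lra|]. rewrite E; apply seg_rev. }
    destruct (classic (v = u')) as [<-|D3].
    { assert (D : u <> v') by (intro; subst; apply Hns; right; auto).
      apply (Col (phi v) (phi u) (phi v')); auto.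
      apply (shared_col _ _ _ (1-s) t); [lra|]. rewrite <- seg_rev; exact E. }
    destruct (classic (v = v')) as [<-|D4].
    { assert (D : u <> u') by (intro; subst; apply Hns; left; auto).
      apply (Col (phi v) (phi u) (phi u')); auto.
      apply (shared_col _ _ _ (1-s) (1-t)); [lra|]. rewrite <- !seg_rev; exact E. }
    destruct (cross_tri P W (phi u) (phi v) (phi u') (phi v') s t) as [[A B]|[[A B]|[[A B]|[A B]]]];
      auto; try (apply Hadj; assumption).
    + apply Hadj in A; apply Hadj in B. exact (Tri u u' v' A Hu'v' B).
    + apply Hadj in A; apply Hadj in B. exact (Tri v u' v' A Hu'v' B).
    + apply Hadj in A; apply Hadj in B. exact (Tri u' u v A Huv B).
    + apply Hadj in A; apply Hadj in B. exact (Tri v' u v A Huv B).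
Qed.
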